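(* Consider an execution of \texttt{ThresholdMonitor} (described in the context) on a database $S$, with parameters $\varepsilon,\delta,t,k$, interacting with a stream of $m$ adaptively chosen queries $f_1,f_2,\dots,f_m:X\to[0,1]$. Let $S_i$ denote the database $S$ as it is before answering the $i$th query. Then for every $\beta>0$, with probability at least $1-\beta$: (1) for every $i$ such that $a_i=\top$ it holds that $f_i(S_i)\geq t-\tilde{O}\left(\frac{1}{\varepsilon}\log\left(\frac{1}{\delta}\right)\log\left(\frac{m}{\beta}\right)\right)$; (2) for every $i$ such that $a_i=\bot$ it holds that $f_i(S_i)\leq t+\tilde{O}\left(\frac{1}{\varepsilon}\log\left(\frac{1}{\delta}\right)\log\left(\frac{m}{\beta}\right)\right)$.
   Context: $X$ is a data domain; a database $S$ is a finite multiset of elements of $X$. For a query $f:X\to[0,1]$ and database $D$, $f(D)=\sum_{x\in D}f(x)$. $\mathrm{Lap}(b)$ denotes the Laplace distribution with density $\frac{1}{2b}e^{-|x|/b}$. Algorithm \texttt{ThresholdMonitor}. Input: database $S$, privacy parameters $\varepsilon,\delta$, threshold $t$, parameter $k$, and an adaptively chosen stream of queries $f_i:X\to[0,1]$. Initialize a counter $c(x)=0$ for all $x\in X$. Let $\Delta=\frac{1}{\varepsilon}\log\left(\frac{1}{\delta}\right)\log\left(\frac{1}{\varepsilon}\log\frac{1}{\delta}\right)$. In each round $i$, on receiving $f_i$: sample independently $w_i\sim\mathrm{Lap}(10\Delta)$ and $v_i\sim\mathrm{Lap}(\frac{1}{\varepsilon}\log\frac{1}{\delta})$; set $\overline{v}_i=\min\{v_i,\Delta\}$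 and $\hat f_i=f_i(S)+w_i+\overline{v}_i$ (with $S$ the current database). If $\hat f_i<t$ output $a_i=\bot$. Otherwise output $a_i=\top$, set $c(x)\leftarrow c(x)+f_i(x)$ for every $x\in X$, and delete from $S$ every element $x$ with $c(x)\geq k$. Proceed to the next round. *)

(* Defs.v *)
From HB Require Import structures.
From mathcomp Require Import all_boot all_order all_algebra.
From mathcomp Require Import all_classical all_reals all_analysis.
Set Implicit Arguments. Unset Strict Implicit. Unset Printing Implicit Defensive.
Import Order.TTheory GRing.Theory Num.Theory.
Local Open Scope classical_set_scope.
Local Open Scope ring_scope.

Definition laplace_pdf {R : realType} (b x : R) : R :=
  (2 * b)^-1 * expR (- `|x| / b).

Definition is_laplace {R : realType} (d : measure_display) (T : measurableType d)
  (P : probability T R) (b : R) (Y : {RV P >-> R}) : Prop :=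
  forall A : set R, measurable A ->
    P (Y @^-1` A) = (\int[@lebesgue_measure R]_(x in A) (laplace_pdf b x)%:E)%E.

Definition mutually_independent {R : realType} (d : measure_display)
  (T : measurableType d) (P : probability T R) (I : eqType)
  (Y : I -> {RV P >-> R}) : Prop :=
  forall (J : seq I) (B : I -> set R), uniq J -> (forall i, measurable (B i)) ->
    P (\big[setI/setT]_(i <- J) (Y i @^-1` B i)) =
    (\prod_(i <- J) P (Y i @^-1` B i))%E.

Definition tm_Delta {R : realType} (eps delta : R) : R :=
  eps^-1 * ln delta^-1 * ln (eps^-1 * ln delta^-1).

(* f(D) = sum_{x in D} f(x), D a finite multiset represented as a list. *)
Definition qeval {R : realType} {X : Type} (f : X -> R) (D : seq X) : R :=
  \sum_(x <- D) f x.

(* State of the algorithm: current database, counters, transcript of answers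
   (true = top, false = bot). *)
Record tm_state {R : realType} {X : Type} := TMState {
  tm_db : seq X;
  tm_cnt : X -> R;
  tm_hist : seq bool }.
Arguments tm_state : clear implicits.

Definition tm_fhat {R : realType} {X : Type} (Delta : R) (f : X -> R)
  (w v : R) (st : tm_state R X) : R :=
  qeval f (tm_db st) + w + Num.min v Delta.

Definition tm_step {R : realType} {X : Type} (Delta t k : R) (f : X -> R)
  (w v : R) (st : tm_state R X) : tm_state R X :=
  if tm_fhat Delta f w v st < t then
    TMState (tm_db st) (tm_cnt st) (rcons (tm_hist st) false)
  else
    let c' := fun x => tm_cnt st x + f x in
    TMState [seq x <- tm_db st | c' x < k] c' (rcons (tm_hist st) true).

(* The (deterministic) adaptive analyst chooses query number i (0-based) as a
   function A of the transcript of previous answers. *)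
Definition tm_query {R : realType} {X : Type} (A : seq bool -> X -> R)
  (st : tm_state R X) : X -> R := A (tm_hist st).

(* State before answering query i (0-based); round j uses noises w j, v j. *)
Fixpoint tm_state_at {R : realType} {X : Type} (eps delta t k : R)
  (A : seq bool -> X -> R) (S : seq X) (w v : nat -> R) (i : nat)
  : tm_state R X :=
  match i with
  | 0 => TMState S (fun _ => 0) [::]
  | j.+1 =>
    let st := tm_state_at eps delta t k A S w v j in
    tm_step (tm_Delta eps delta) t k (tm_query A st) (w j) (v j) st
  end.

(* S_i, f_i and a_i (a_i = true iff a_i = top), all 0-based. *)
Definition tm_S {R : realType} {X : Type} eps delta t k A (S : seq X)
  (w v : nat -> R) i := tm_db (tm_state_at eps delta t k A S w v i).
Definition tm_f {R : realType} {X : Type} eps delta t k A (S : seq X)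
  (w v : nat -> R) i := tm_query A (tm_state_at eps delta t k A S w v i).
Definition tm_answer {R : realType} {X : Type} (eps delta t k : R) A
  (S : seq X) (w v : nat -> R) i : bool :=
  ~~ (tm_fhat (tm_Delta eps delta) (tm_f eps delta t k A S w v i) (w i) (v i)
        (tm_state_at eps delta t k A S w v i) < t).

(* Main.v *)
Require Import Defs.
From HB Require Import structures.
From mathcomp Require Import all_boot all_order all_algebra.
From mathcomp Require Import all_classical all_reals all_analysis.
From mathcomp Require Import ring lra measurable_realfun.
Import Order.TTheory GRing.Theory Num.Theory numFieldNormedType.Exports.
Local Open Scope classical_set_scope.
Local Open Scope ring_scope.

Lemma laplace_cont {R : realType} (b : R) : continuous (fun x : R => laplace_pdf b x).
Proof.
move=> x; rewrite /laplace_pdf.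
have h1 : {for x, continuous (fun z : R => - `|z| / b)}.
  apply: cvgMl; apply: cvgN; exact: norm_continuous.
have h2 : {for x, continuous (fun z : R => expR (- `|z| / b))}.
  exact: (continuous_comp h1 (@continuous_expR R _)).
apply: cvgM => //; exact: cvg_cst.
Qed.

Lemma laplace_neg_half {R : realType} (b s : R) : 0 < b -> 0 < s ->
  (\int[@lebesgue_measure R]_(x in `[(- s)%R, 0%R]) (laplace_pdf b x)%:E =
   \int[@lebesgue_measure R]_(x in `[0%R, s]) (laplace_pdf b x)%:E)%E.
Proof.
move=> b0 s0.
have := @integration_by_substitution_oppr R (laplace_pdf b) 0 s (ltW s0).
rewrite oppr0 => ->; last first.
  apply: continuous_subspaceT; exact: laplace_cont.
apply: eq_integral => x _ /=.
by rewrite /laplace_pdf normrN.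
Qed.

Lemma laplace_half {R : realType} (b s : R) : 0 < b -> 0 < s ->
  (\int[@lebesgue_measure R]_(x in `[0%R, s]) (laplace_pdf b x)%:E =
   (2^-1 * (1 - expR (- s / b)))%:E)%E.
Proof.
move=> b0 s0.
have b0' : 0 <= b^-1 by rewrite invr_ge0 ltW.
transitivity (\int[@lebesgue_measure R]_(x in `[0%R, s]) ((2^-1)%:E * (exponential_pdf b^-1 x)%:E))%E.
  apply: eq_integral.
  move=> x; rewrite inE /= in_itv /= => /andP[x0 _].
  rewrite -EFinM /laplace_pdf exponential_pdfE // ger0_norm //.
  congr EFin; rewrite invfM mulrA; congr (_ * expR _).
  by rewrite mulNr mulrC mulNr.
rewrite ge0_integralZl_EFin //; last 2 first.
- by move=> x _; rewrite lee_fin exponential_pdf_ge0.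
- apply/measurable_EFinP; apply: measurable_funTS.
  exact: measurable_exponential_pdf.
have := exponential_prob_itv0c b^-1 s0.
rewrite /exponential_prob => ->.
by rewrite -EFinB -EFinM !mulNr [s / b]mulrC.
Qed.

Lemma split_itv {R : realType} (s : R) : 0 < s ->
  `[(- s)%R, s]%classic = `[(- s)%R, 0%R[%classic `|` `[0%R, s]%classic :> set R.
Proof.
move=> s0; apply/seteqP; split => x /=; rewrite !in_itv /=.
  move=> /andP[h1 h2]; have [x0|x0] := ltP x 0.
    by left; rewrite h1.
  by right; rewrite h2.
case=> /andP[h1 h2]; apply/andP; split; lra.
Qed.

Lemma laplace_tail {R : realType} d (T : measurableType d) (P : probability T R)
  (b s : R) (Y : {RV P >-> R}) : is_laplace b Y -> 0 < b -> 0 < s ->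
  P (Y @^-1` [set x | s < `|x|]) = (expR (- s / b))%:E.
Proof.
move=> HY b0 s0.
have mA : measurable (`[(- s)%R, 0%R[%classic : set R) by [].
have mB : measurable (`[0%R, s]%classic : set R) by [].
have -> : [set x : R | s < `|x|] = ~` (`[(- s)%R, 0%R[%classic `|` `[0%R, s]%classic).
  rewrite -split_itv //.
  apply/seteqP; split => x /=; rewrite in_itv /= ltNge ler_norml; by case: (_ && _).
rewrite -preimage_setC probability_setC; last first.
  exact: (measurable_funPTI Y (measurableU _ _ mA mB)).
rewrite preimage_setU measureU //; last 3 first.
- exact: (measurable_funPTI Y mA).
- exact: (measurable_funPTI Y mB).
- rewrite -preimage_setI; apply/seteqP; split => x //=.
  rewrite !in_itv /= => -[/andP[_ h1] /andP[h2 _]]; lra.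
have h1 := HY _ mA; have h2 := HY _ mB.
transitivity (1 - (\int[@lebesgue_measure R]_(x in `[(- s)%R, 0%R[%classic) (laplace_pdf b x)%:E
   + \int[@lebesgue_measure R]_(x in `[0%R, s]%classic) (laplace_pdf b x)%:E))%E.
  by rewrite -h1 -h2.
rewrite integral_itv_bndo_bndc; last first.
  apply/measurable_EFinP; apply: measurable_funTS.
  exact: continuous_measurable_fun (laplace_cont b).
rewrite laplace_neg_half // laplace_half // -EFinD.
by congr EFin; field.
Qed.

Lemma union_bound {R : realType} d (T : measurableType d) (P : probability T R)
  (F : nat -> set T) (p : R) (n : nat) :
  (forall i, measurable (F i)) -> (forall i, (P (F i) <= p%:E)%E) ->
  measurable (\big[setU/set0]_(i < n) F i) /\
  (P (\big[setU/set0]_(i < n) F i) <= (n%:R * p)%:E)%E.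
Proof.
move=> mF PF; elim: n => [|n [IHm IHp]].
  by rewrite big_ord0 measure0 mul0r; split.
rewrite big_ord_recr /=; split; first exact: measurableU.
apply: (le_trans (measureU2 _ _ _)) => //.
rewrite -nat1r mulrDl mul1r EFinD addeC.
exact: (leeD IHp (PF n)).
Qed.

Lemma in_union {T : Type} (F : nat -> set T) (n i : nat) (x : T) :
  (i < n)%N -> F i x -> (\big[setU/set0]_(j < n) F j) x.
Proof.
elim: n => [//|n IH] hi hx.
rewrite big_ord_recr /=.
move: hi; rewrite ltnS leq_eqVlt => /orP[/eqP ei|hi]; first by right; rewrite -ei.
by left; apply: IH.
Qed.

Theorem theorem3p1 :
  exists C : nat,
  forall (R : realType) (d : measure_display) (T : measurableType d)
    (P : probability T R) (X : Type)
    (S : seq X) (eps delta t k : R) (m : nat)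
    (A : seq bool -> X -> R)
    (w v : nat -> {RV P >-> R}),
    0 < eps -> 0 < delta -> delta < 1 -> 1 < eps^-1 * ln delta^-1 ->
    (forall h x, 0 <= A h x <= 1) ->
    (forall i, is_laplace (10 * tm_Delta eps delta) (w i)) ->
    (forall i, is_laplace (eps^-1 * ln delta^-1) (v i)) ->
    mutually_independent
      (fun j : nat + nat => match j with inl i => w i | inr i => v i end) ->
    forall beta : R, 0 < beta ->
    let err := C%:R * (eps^-1 * ln delta^-1) * ln (2 * m%:R / beta)
               * (1 + ln (eps^-1 * ln delta^-1)) in
    exists E : set T, measurable E /\ (1 - beta%:E <= P E)%E /\
      forall om, E om ->
        forall i, (i < m)%N ->
          let wo := fun j => w j om in
          let vo := fun j => v j om in
          let fi := tm_f eps delta t k A S wo vo i in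
          let Si := tm_S eps delta t k A S wo vo i in
          (tm_answer eps delta t k A S wo vo i -> t - err <= qeval fi Si) /\
          (~~ tm_answer eps delta t k A S wo vo i -> qeval fi Si <= t + err).
Proof.
exists 12%N.
move=> R d T P X S eps delta t k m A w v eps0 d0 d1 L1 HA Hw Hv _ beta b0.
have [b1|b1] := leP 1 beta.
  move=> err; exists set0; split; first done; split; last by move=> om [].
  rewrite measure0 -EFinB lee_fin; lra.
case: m => [|n].
  move=> err; exists setT; split; first done; split; last by move=> om _ i.
  rewrite probability_setT -EFinB lee_fin; lra.
set m := n.+1.
set L := eps^-1 * ln delta^-1 in L1 Hv *.
have DE : tm_Delta eps delta = L * ln L by [].
rewrite DE in Hw.
set l := ln L in DE Hw *.
have L0 : 0 < L by lra.
have l0 : 0 < l by exact: ln_gt0.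
have m0 : 0 < m%:R :> R by rewrite ltr0n.
have m1 : 1 <= m%:R :> R by rewrite ler1n.
set M := 2 * m%:R / beta.
have M2 : 2 <= M.
  rewrite /M ler_pdivlMr //; nra.
have M0 : 0 < M by lra.
set q := ln M.
have q0 : 2^-1 <= q.
  have h2 : ln 2 <= q by rewrite /q ler_ln ?posrE //; lra.
  have := expR_ge1Dx (- ln (2 : R)).
  rewrite expRN lnK ?posrE //; lra.
move=> err.
set bw := 10 * (L * l).
set sw := bw * q.
set sv := L * q.
have bw0 : 0 < bw by rewrite /bw; apply: mulr_gt0 => //; apply: mulr_gt0.
have q0' : 0 < q by lra.
have sw0 : 0 < sw by apply: mulr_gt0.
have sv0 : 0 < sv by apply: mulr_gt0.
pose Fw i := w i @^-1` [set x : R | sw < `|x|].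
pose Fv i := v i @^-1` [set x : R | sv < `|x|].
pose F i := Fw i `|` Fv i.
have mS (s : R) : measurable [set x : R | s < `|x|].
  have -> : [set x : R | s < `|x|] = ~` `[(- s)%R, s]%classic.
    apply/seteqP; split => x /=; rewrite in_itv /= ltNge ler_norml; by case: (_ && _).
  exact: measurableC.
have mF i : measurable (F i).
  apply: measurableU; exact: measurable_funPTI.
have eM : expR (- q) = beta / (2 * m%:R).
  rewrite expRN lnK ?posrE // /M invf_div //.
have PF i : (P (F i) <= (beta / m%:R)%:E)%E.
  apply: (@le_trans _ _ (P (Fw i) + P (Fv i))%E).
    by apply: measureU2; exact: measurable_funPTI.
  have -> : beta / m%:R = beta / (2 * m%:R) + beta / (2 * m%:R) by field; lra.
  rewrite EFinD; apply: leeD.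
    have -> : P (Fw i) = (expR (- sw / bw))%:E := @laplace_tail R d T P bw sw (w i) (Hw i) bw0 sw0.
    rewrite /sw mulNr mulrAC divff ?mul1r; last by lra.
    by rewrite eM.
  have -> : P (Fv i) = (expR (- sv / L))%:E := @laplace_tail R d T P L sv (v i) (Hv i) L0 sv0.
  rewrite /sv mulNr mulrAC divff ?mul1r; last by lra.
  by rewrite eM.
have [mB PB] := @union_bound R d T P F _ m mF PF.
exists (~` \big[setU/set0]_(i < m) F i); split; first exact: measurableC.
split.
  rewrite probability_setC //.
  apply: leeB => //.
  by move: PB; rewrite mulrC divfK //; lra.
move=> om Hom i im wo vo fi Si.
have nF : ~ F i om by move=> h; apply: Hom; exact: (@in_union T F m i om im h).
have hw : `|wo i| <= sw by rewrite leNgt; apply/negP => h; apply: nF; left.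
have hv : `|vo i| <= sv by rewrite leNgt; apply/negP => h; apply: nF; right.
rewrite /tm_answer /tm_fhat /Si /fi /tm_S DE.
set x := qeval _ _.
set wi := wo i in hw *. set vi := vo i in hv *.
move: hw hv; rewrite !ler_norml => /andP[hw1 hw2] /andP[hv1 hv2].
have hmin1 : Num.min vi (L * l) <= L * l by rewrite ge_min lexx orbT.
have hmin2 : - sv <= Num.min vi (L * l).
  rewrite le_min hv1 /=; have : 0 < L * l by apply: mulr_gt0. lra.
have f1 : 0 <= L * l * (2 * q - 1).
  apply: mulr_ge0; [apply: mulr_ge0; lra | lra].
have f2 : 0 <= L * q by apply: mulr_ge0; lra.
have f3 : 0 <= L * q * l by apply: mulr_ge0; lra.
have e1 : sw + L * l <= err.
  rewrite /err /sw /bw; nra.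
have e2 : sw + sv <= err.
  rewrite /err /sw /bw /sv; nra.
split.
  rewrite -leNgt => h; lra.
move/negPn => h; lra.
Qed.
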